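(* Let $J\in\mathfrak{so}(\mathfrak a)$ be a non-singular skew-symmetric endomorphism of a Euclidean space $\mathfrak a$, and let $V=\mathbb R J$ with any inner product. Then $(V,\langle\cdot,\cdot\rangle)$ is a WS-pair; in fact for every $X\in\mathfrak a$ there exists $N\in O(\mathfrak a)$ with $NJN^{-1}=-J$ and $NX=-X$.
   Context: For a Euclidean space $\mathfrak a$, a subspace $V\subset\mathfrak{so}(\mathfrak a)$ with inner product $\langle\cdot,\cdot\rangle$ defines the metric 2-step nilpotent Lie algebra $\mathfrak n=V\oplus\mathfrak a$ (orthogonal sum, $V$ central, $\langle J,[X,Y]\rangle=\langle JX,Y\rangle$ for $J\in V$, $X,Y\in\mathfrak a$). It is a WS-pair if the corresponding simply connected nilpotent Lie group with left-invariant metric is weakly symmetric (any two points can be interchanged by an isometry). Standing fact: $(V,\langle\cdot,\cdot\rangle)$ is a WS-pair iff for every $J\in V$ and $X\in\mathfrak a$ there is $N$ in the orthogonal normalizer $\mathcal N(V)=\{N\in O(\mathfrak a): NVN^{-1}\subset V \text{ and } K\mapsto NKN^{-1} \text{ is an orthogonal map of } (V,\langle\cdot,\cdot\rangle)\}$ with $NX=-X$ and $NJ=-JN$. *)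

(* Defs.v *)
(* Euclidean space a = 'cV[R]_n with the standard inner
   product; endomorphisms of a = 'M[R]_n acting by left multiplication. *)
From HB Require Import structures.
From mathcomp Require Import all_boot all_order all_algebra.
From mathcomp Require Import reals.
Set Implicit Arguments. Unset Strict Implicit. Unset Printing Implicit Defensive.
Import Order.TTheory GRing.Theory Num.Theory.
Local Open Scope ring_scope.

Section Defs.
Variables (R : realType) (n : nat).

Definition skew_sym (A : 'M[R]_n) : Prop := A^T = - A.

Definition orth_mx (N : 'M[R]_n) : Prop := N^T *m N = 1%:M.

Definition is_so_subspace (V : 'M[R]_n -> Prop) : Prop :=
  V 0 /\ (forall (c : R) K L, V K -> V L -> V (c *: K + L)) /\
  (forall K, V K -> skew_sym K).

(* ip is an inner product on V (only its values on V matter). *)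
Definition is_inner_product (V : 'M[R]_n -> Prop) (ip : 'M[R]_n -> 'M[R]_n -> R)
  : Prop :=
  (forall (c : R) K L M, V K -> V L -> V M ->
      ip (c *: K + L) M = c * ip K M + ip L M) /\
  (forall K L, V K -> V L -> ip K L = ip L K) /\
  (forall K, V K -> K != 0 -> 0 < ip K K).

Definition orth_normalizer (V : 'M[R]_n -> Prop) (ip : 'M[R]_n -> 'M[R]_n -> R)
  (N : 'M[R]_n) : Prop :=
  orth_mx N /\
  (forall K, V K -> V (N *m K *m invmx N)) /\
  (forall K L, V K -> V L ->
     ip (N *m K *m invmx N) (N *m L *m invmx N) = ip K L).

(* WS-pair, via the standing characterization of the paper *)
Definition WS_pair (V : 'M[R]_n -> Prop) (ip : 'M[R]_n -> 'M[R]_n -> R) : Prop :=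
  is_so_subspace V /\ is_inner_product V ip /\
  forall (J : 'M[R]_n) (X : 'cV[R]_n), V J ->
    exists N, orth_normalizer V ip N /\ N *m X = - X /\ N *m J = - (J *m N).

Definition line (J : 'M[R]_n) : 'M[R]_n -> Prop := fun K => exists c : R, K = c *: J.

End Defs.

(* Main.v *)
Require Import Defs.
From HB Require Import structures.
From mathcomp Require Import all_boot all_order all_algebra.
From mathcomp Require Import reals.
From mathcomp Require Import complex spectral.
From mathcomp Require Import ring lra zify.
Set Implicit Arguments. Unset Strict Implicit. Unset Printing Implicit Defensive.
Import Order.TTheory GRing.Theory Num.Theory.
Local Open Scope ring_scope.

Section S0.
Variable R : realType.
Local Notation C := (R[i]).
Local Notation toC := (real_complex R).

Lemma Re_sum (I : Type) (r : seq I) (F : I -> C) : complex.Re (\sum_(i <- r) F i) = \sum_(i <- r) complex.Re (F i).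
Proof. elim: r => [|x r IH]; first by rewrite !big_nil. by rewrite !big_cons -IH; case: (F x) => a b; case: (\sum_(i <- r) F i). Qed.
Lemma Im_sum (I : Type) (r : seq I) (F : I -> C) : complex.Im (\sum_(i <- r) F i) = \sum_(i <- r) complex.Im (F i).
Proof. elim: r => [|x r IH]; first by rewrite !big_nil. by rewrite !big_cons -IH; case: (F x) => a b; case: (\sum_(i <- r) F i). Qed.

Lemma Re_mulrC (z : C) (x : R) : complex.Re (z * toC x) = complex.Re z * x.
Proof. by case: z => a b /=; rewrite mulr0 subr0. Qed.
Lemma Im_mulrC (z : C) (x : R) : complex.Im (z * toC x) = complex.Im z * x.
Proof. by case: z => a b /=; rewrite mulr0 add0r. Qed.

Lemma Re_mulmx n (u : 'rV[C]_n) (M : 'M[R]_n) :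
  map_mx (@complex.Re R) (u *m map_mx toC M) = map_mx (@complex.Re R) u *m M.
Proof.
apply/rowP => j; rewrite !mxE Re_sum; apply: eq_bigr => k _.
by rewrite !mxE Re_mulrC.
Qed.
Lemma Im_mulmx n (u : 'rV[C]_n) (M : 'M[R]_n) :
  map_mx (@complex.Im R) (u *m map_mx toC M) = map_mx (@complex.Im R) u *m M.
Proof.
apply/rowP => j; rewrite !mxE Im_sum; apply: eq_bigr => k _.
by rewrite !mxE Im_mulrC.
Qed.
Lemma Re_scale n (a : C) (u : 'rV[C]_n) :
  map_mx (@complex.Re R) (a *: u) = complex.Re a *: map_mx (@complex.Re R) u - complex.Im a *: map_mx (@complex.Im R) u.
Proof. by apply/rowP => j; rewrite !mxE; case: a => a b; case: (u 0 j). Qed.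
Lemma Im_scale n (a : C) (u : 'rV[C]_n) :
  map_mx (@complex.Im R) (a *: u) = complex.Im a *: map_mx (@complex.Re R) u + complex.Re a *: map_mx (@complex.Im R) u.
Proof. by apply/rowP => j; rewrite !mxE; case: a => a b; case: (u 0 j) => c d /=; rewrite addrC. Qed.
End S0.

Section S1.
Variable R : realType.
Local Notation C := (R[i]).
Local Notation toC := (real_complex R).

Lemma exists_eig_C n (S P : 'M[R]_n) : P *m P = P -> P *m S = S *m P -> P != 0 ->
  exists u : 'rV[C]_n, [/\ u != 0, u *m map_mx toC P = u & exists a, u *m map_mx toC S = a *: u].
Proof.
move=> PP PS P0.
set Sc := map_mx toC S; set Pc := map_mx toC P.
have PcPc : Pc *m Pc = Pc by rewrite -map_mxM PP.
have comm : Pc *m Sc = Sc *m Pc by rewrite -!map_mxM PS.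
have Pc0 : Pc != 0 by rewrite map_mx_eq0.
set E := eigenspace Pc 1.
have EP : E *m Pc = 1 *: E by apply/eigenspaceP.
have PcE : (Pc <= E)%MS by apply/eigenspaceP; rewrite PcPc scale1r.
have rE : (0 < \rank E)%N.
  rewrite lt0n mxrank_eq0; apply: contraNneq Pc0 => E0.
  by move: PcE; rewrite E0 submx0.
have stE : stablemx E Sc.
  by apply/eigenspaceP; rewrite -mulmxA -comm mulmxA EP !scale1r.
have [a ea] := eigenvalue_closed (restrictmx E Sc) rE.
have [w0 w0e w00] := eigenvalueP ea.
have st0 : stablemx w0 (restrictmx E Sc) by rewrite w0e scalemx_sub.
rewrite (stablemx_restrict _ stE) in st0.
move/eigenvectorP: st0 => [a' /eigenspaceP ua'].
exists (w0 *m row_base E); split => //; last by exists a'.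
  by rewrite mulmx_free_eq0 ?row_base_free.
have uE : (w0 *m row_base E <= E)%MS by rewrite (submx_trans (submxMl _ _)) ?eq_row_base.
by move/eigenspaceP: uE; rewrite scale1r.
Qed.
End S1.

Section S2.
Variable R : realType.
Local Notation C := (R[i]).
Local Notation toC := (real_complex R).

Lemma trTM_E m n (A : 'M[R]_(m,n)) : \tr (A^T *m A) = \sum_i \sum_j A j i ^+ 2.
Proof.
rewrite /mxtrace; apply: eq_bigr => i _; rewrite mxE; apply: eq_bigr => j _.
by rewrite mxE expr2.
Qed.

Lemma trTM_ge0 m n (A : 'M[R]_(m,n)) : 0 <= \tr (A^T *m A).
Proof. by rewrite trTM_E; apply: sumr_ge0 => i _; apply: sumr_ge0 => j _; apply: sqr_ge0. Qed.

Lemma trTM_eq0 m n (A : 'M[R]_(m,n)) : \tr (A^T *m A) = 0 -> A = 0.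
Proof.
rewrite trTM_E => /eqP; rewrite psumr_eq0 => [/allP H|i _]; last first.
  by apply: sumr_ge0 => j _; apply: sqr_ge0.
apply/matrixP => j i; rewrite mxE.
have /implyP := H i (mem_index_enum _); rewrite /= => /(_ isT).
rewrite psumr_eq0 => [/allP /(_ j (mem_index_enum _))|k _]; last exact: sqr_ge0.
by rewrite /= sqrf_eq0 => /eqP.
Qed.

Lemma trTM_gt0 m n (A : 'M[R]_(m,n)) : A != 0 -> 0 < \tr (A^T *m A).
Proof.
move=> A0; rewrite lt_def trTM_ge0 andbT; apply: contraNneq A0 => /trTM_eq0 ->.
by [].
Qed.

Lemma tr_rowT n (r s : 'rV[R]_n) : \tr (r *m s^T) = \tr (s *m r^T).
Proof. by rewrite -mxtrace_tr trmx_mul trmxK. Qed.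

Lemma exists_eig n (S P : 'M[R]_n) : S^T = S -> P *m P = P -> P *m S = S *m P -> P != 0 ->
  exists r : 'rV[R]_n, [/\ r != 0, r *m P = r & exists l, r *m S = l *: r].
Proof.
move=> St PP PS P0.
have [u [u0 uP [a ua]]] := exists_eig_C PP PS P0.
set ur := map_mx (@complex.Re R) u; set ui := map_mx (@complex.Im R) u.
have eR : ur *m S = complex.Re a *: ur - complex.Im a *: ui by rewrite -Re_mulmx ua Re_scale.
have eI : ui *m S = complex.Im a *: ur + complex.Re a *: ui by rewrite -Im_mulmx ua Im_scale.
have pR : ur *m P = ur by rewrite -Re_mulmx uP.
have pI : ui *m P = ui by rewrite -Im_mulmx uP.
have nz : (ur != 0) || (ui != 0).
  apply: contraNT u0; rewrite negb_or !negbK => /andP[/eqP r0 /eqP i0].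
  apply/eqP/rowP => j; move/matrixP: r0 => /(_ 0 j); move/matrixP: i0 => /(_ 0 j).
  rewrite !mxE; case: (u 0 j) => x y /= -> ->; by [].
have key : \tr (ur *m S *m ui^T) = \tr (ui *m S *m ur^T).
  by rewrite -mxtrace_tr !trmx_mul trmxK St mulmxA.
rewrite eR eI !mulmxBl !mulmxDl -!scalemxAl !mxtraceD ?mxtraceN ?linearB ?linearN !mxtraceZ ?linearZ /= in key.
rewrite [\tr (ui *m ur^T)]tr_rowT in key.
have b0 : complex.Im a = 0.
  have H1 := trTM_ge0 (ur^T); have H2 := trTM_ge0 (ui^T).
  rewrite trmxK in H1; rewrite trmxK in H2.
  have : complex.Im a * (\tr (ur *m ur^T) + \tr (ui *m ui^T)) = 0.
    set x := \tr (ur *m ui^T) in key. 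
    move: key; set y := \tr (ur *m ur^T); set z := \tr (ui *m ui^T); move=> key; lra.
  move/eqP; rewrite mulf_eq0 => /orP[/eqP //|].
  case/orP: nz => nz.
    have := trTM_gt0 (A:=ur^T); rewrite trmxK trmx_eq0 => /(_ nz) H; lra.
  have := trTM_gt0 (A:=ui^T); rewrite trmxK trmx_eq0 => /(_ nz) H; lra.
rewrite b0 scale0r subr0 in eR; rewrite b0 scale0r add0r in eI.
case/orP: nz => nz.
  by exists ur; split => //; exists (complex.Re a).
by exists ui; split => //; exists (complex.Re a).
Qed.
End S2.

Section Main.
Variables (R : realType) (n : nat) (J : 'M[R]_n).
Hypotheses (Jskew : J^T = -J) (Ju : J \in unitmx).
Local Notation S := (J^T *m J).

Lemma mx11_tr (K : 'M[R]_1) : K = (\tr K)%:M.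
Proof. by rewrite {1}[K]mx11_scalar /mxtrace big_ord1. Qed.

Lemma scal0 : (0 : R)%:M = 0 :> 'M[R]_1.
Proof. by rewrite raddf0. Qed.

Lemma skew0 (v : 'cV[R]_n) : v^T *m J *m v = 0.
Proof.
have h : \tr (v^T *m J *m v) = - \tr (v^T *m J *m v).
  by rewrite -{1}mxtrace_tr !trmx_mul trmxK Jskew mulNmx mulmxN linearN mulmxA.
by rewrite [LHS]mx11_tr (_ : \tr _ = 0) ?scal0 //; lra.
Qed.

Lemma Jinj (v : 'cV[R]_n) : J *m v = 0 -> v = 0.
Proof. by move=> h; rewrite -[v]mul1mx -(mulVmx Ju) -mulmxA h mulmx0. Qed.

Lemma St : S^T = S.
Proof. by rewrite trmx_mul trmxK. Qed.

Lemma SE : S = - (J *m J).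
Proof. by rewrite Jskew mulNmx. Qed.

Lemma trT (m : nat) (a b : 'cV[R]_m) : \tr (a^T *m b) = \tr (b^T *m a).
Proof. by rewrite -mxtrace_tr trmx_mul trmxK. Qed.

Lemma get_w (P : 'M[R]_n) (X : 'cV[R]_n) : P^T = P -> P *m P = P -> P *m J = J *m P -> P != 0 ->
  exists w : 'cV[R]_n, exists l : R,
    [/\ w != 0, P *m w = w, J *m (J *m w) = - (l *: w), 0 < l & w^T *m (J *m X) = 0].
Proof.
move=> Pt PP PJ P0.
have PJt : P *m J^T = J^T *m P by rewrite -{1}Pt -trmx_mul -PJ trmx_mul Pt.
have PS : P *m S = S *m P by rewrite mulmxA PJt -!mulmxA PJ.
have [r [r0 rP [l rS]]] := exists_eig St PP PS P0.
set v := r^T.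
have Pv : P *m v = v by rewrite /v -Pt -trmx_mul rP.
have Sv : S *m v = l *: v by rewrite /v -{1}St -trmx_mul rS linearZ.
have JJv : J *m (J *m v) = - (l *: v) by rewrite mulmxA -Sv SE mulNmx opprK.
have v0 : v != 0 by rewrite /v trmx_eq0.
have Jv0 : J *m v != 0 by apply/negP => /eqP /Jinj /eqP; apply/negP.
have l0 : 0 < l.
  have h1 := trTM_gt0 v0; have h2 := trTM_gt0 Jv0.
  rewrite trmx_mul -mulmxA [J^T *m (J *m v)]mulmxA Sv -scalemxAr mxtraceZ in h2.
  by rewrite (pmulr_lgt0 _ h1) in h2.
set a := \tr (v^T *m X); set b := \tr (v^T *m (J *m X)).
have vX : v^T *m X = a%:M by rewrite [LHS]mx11_tr.
have vJX : v^T *m (J *m X) = b%:M by rewrite [LHS]mx11_tr.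
have JvJX : (J *m v)^T *m (J *m X) = (l * a)%:M.
  rewrite trmx_mul -mulmxA (mulmxA _ J X) mulmxA -[v^T *m S]trmxK trmx_mul trmxK St Sv.
  by rewrite linearZ -scalemxAl vX scale_scalar_mx.
set w0 := a *: v - (l^-1 * b) *: (J *m v).
have Pw0 : P *m w0 = w0.
  by rewrite mulmxBr -!scalemxAr Pv mulmxA PJ -mulmxA Pv.
have JJw0 : J *m (J *m w0) = - (l *: w0).
  rewrite !mulmxBr -!scalemxAr JJv mulmxN -scalemxAr /w0 scalerBr !scalerA !scalerN opprB !scalerA opprK addrC; congr (_ *: _ - _ *: _); by rewrite mulrC.
have w0JX : w0^T *m (J *m X) = 0.
  rewrite linearB !linearZ /= mulmxDl scalerN mulNmx -!scalemxAl vJX JvJX.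
  rewrite -!scale_scalar_mx !scalerA !scale_scalar_mx -raddfB /=.
  rewrite (_ : _ - _ = 0) ?scal0 //.
  by field; rewrite gt_eqF.
case: (eqVneq w0 0) => [w00|w00]; last by exists w0, l; split.
exists v, l; split => //.
have ha : a = 0.
  have : v^T *m w0 = 0 by rewrite w00 mulmx0.
  rewrite mulmxBr -!scalemxAr mulmxA skew0 scaler0 subr0.
  move/(congr1 mxtrace); rewrite mxtraceZ mxtrace0 => /eqP; rewrite mulf_eq0 => /orP[/eqP //|].
  by have := trTM_gt0 v0; rewrite lt_def => /andP[/negPf ->].
move: w00; rewrite /w0 ha scale0r sub0r => /eqP; rewrite oppr_eq0 scaler_eq0 (negPf Jv0) orbF.
rewrite mulf_eq0 invr_eq0 (gt_eqF l0) /= => /eqP hb.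
by rewrite vJX hb scal0.
Qed.

End Main.

Section Plane.
Variables (R : realType) (n : nat) (J : 'M[R]_n).
Hypotheses (Jskew : J^T = -J) (Ju : J \in unitmx).
Variables (P : 'M[R]_n) (X w : 'cV[R]_n) (l : R).
Hypotheses (Pt : P^T = P) (PJ : P *m J = J *m P) (w0 : w != 0) (Pw : P *m w = w)
  (JJw : J *m (J *m w) = - (l *: w)) (l0 : 0 < l) (wJX : w^T *m (J *m X) = 0).

Let nu := \tr (w^T *m w).
Let A := w *m w^T.
Let B := J *m w *m (w^T *m J).
Definition comb (x y : R) := x *: A + y *: B.

Lemma nu0 : 0 < nu. Proof. exact: trTM_gt0. Qed.
Lemma ww : w^T *m w = nu%:M. Proof. exact: mx11_tr. Qed.
Lemma wJw : w^T *m (J *m w) = 0. Proof. by rewrite mulmxA skew0. Qed.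
Lemma wJJ : w^T *m J *m J = - (l *: w^T).
Proof.
have h : (J *m (J *m w))^T = - (l *: w^T).
  by rewrite JJw; apply/matrixP => i j; rewrite !mxE.
rewrite -h !trmx_mul Jskew.
by rewrite !(mulmxN, mulNmx) opprK.
Qed.
Lemma wP : w^T *m P = w^T. Proof. by rewrite -Pt -trmx_mul Pw. Qed.

Lemma mulmx4 (m1 m2 m3 m4 m5 : nat) (a : 'M[R]_(m1,m2)) (b : 'M[R]_(m2,m3)) (c : 'M[R]_(m3,m4)) (d : 'M[R]_(m4,m5)) :
  a *m b *m (c *m d) = a *m (b *m c) *m d.
Proof. by rewrite !mulmxA. Qed.

Lemma wJJw : (w^T *m J) *m (J *m w) = (- (l * nu))%:M.
Proof. by rewrite mulmxA wJJ mulNmx -scalemxAl ww scale_scalar_mx raddfN. Qed.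

Lemma AA : A *m A = nu *: A.
Proof. by rewrite /A mulmx4 ww mul_mx_scalar scalemxAl. Qed.
Lemma AB : A *m B = 0.
Proof. by rewrite /A /B mulmx4 wJw mulmx0 mul0mx. Qed.
Lemma BA : B *m A = 0.
Proof. by rewrite /A /B mulmx4 -[w^T *m J *m w]mulmxA wJw mulmx0 mul0mx. Qed.
Lemma BB : B *m B = (- (l * nu)) *: B.
Proof. by rewrite /B mulmx4 wJJw mul_mx_scalar -scalemxAl. Qed.
Lemma JB : J *m B = (- l) *: (A *m J).
Proof. by rewrite /B /A mulmxA JJw mulNmx -scalemxAl scaleNr -mulmxA. Qed.
Lemma BJ : B *m J = (- l) *: (J *m A).
Proof. by rewrite /B /A -mulmxA wJJ mulmxN -scalemxAr scaleNr !mulmxA. Qed.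
Lemma PA : P *m A = A. Proof. by rewrite /A mulmxA Pw. Qed.
Lemma AP : A *m P = A. Proof. by rewrite /A -mulmxA wP. Qed.
Lemma PB : P *m B = B. Proof. by rewrite /B !mulmxA PJ -(mulmxA J P w) Pw. Qed.
Lemma BP : B *m P = B. Proof. by rewrite /B -!mulmxA -PJ (mulmxA w^T P J) wP. Qed.
Lemma AT : A^T = A. Proof. by rewrite /A trmx_mul trmxK. Qed.
Lemma BT : B^T = B. Proof. by rewrite /B !trmx_mul trmxK Jskew mulmxN mulNmx mulNmx mulmxN opprK !mulmxA. Qed.
Lemma trA : \tr A = nu. Proof. by rewrite /A mxtrace_mulC. Qed.
Lemma trB : \tr B = - (l * nu). Proof. by rewrite /B mxtrace_mulC wJJw mxtrace_scalar. Qed.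
Lemma BX : B *m X = 0. Proof. by rewrite /B -mulmxA -(mulmxA w^T) wJX mulmx0. Qed.
Lemma combM x y x' y' : comb x y *m comb x' y' = comb (x * x' * nu) (y * y' * (- (l * nu))).
Proof.
rewrite /comb mulmxDl !mulmxDr -!scalemxAl -!scalemxAr AA AB BA BB !scaler0 addr0 add0r !scalerA.
by congr (_ *: _ + _ *: _); ring.
Qed.
Lemma combT x y : (comb x y)^T = comb x y.
Proof. by rewrite /comb linearD !linearZ /= AT BT. Qed.
Lemma Pcomb x y : P *m comb x y = comb x y.
Proof. by rewrite /comb mulmxDr -!scalemxAr PA PB. Qed.
Lemma combP x y : comb x y *m P = comb x y.
Proof. by rewrite /comb mulmxDl -!scalemxAl AP BP. Qed.
Lemma Jcomb x y : J *m comb x y = x *: (J *m A) + (y * - l) *: (A *m J).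
Proof. by rewrite /comb mulmxDr -!scalemxAr JB scalerA. Qed.
Lemma combJ x y : comb x y *m J = x *: (A *m J) + (y * - l) *: (J *m A).
Proof. by rewrite /comb mulmxDl -!scalemxAl BJ scalerA. Qed.
Lemma trcomb x y : \tr (comb x y) = x * nu + y * (- (l * nu)).
Proof. by rewrite /comb mxtraceD !mxtraceZ trA trB. Qed.
Lemma combX x y : comb x y *m X = x *: (A *m X).
Proof. by rewrite /comb mulmxDl -!scalemxAl BX scaler0 addr0. Qed.
Lemma plane : exists Q M1 : 'M[R]_n,
  [/\ Q^T = Q, Q *m Q = Q, P *m Q = Q, Q *m P = Q & Q *m J = J *m Q] /\
  [/\ \tr Q = 2, M1^T *m M1 = Q, Q *m M1 = M1, M1 *m Q = M1 & M1 *m J = - (J *m M1)] /\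
  [/\ M1 *m X = - (Q *m X), P *m M1 = M1 & M1 *m P = M1].
Proof.
have n0 : nu != 0 by rewrite gt_eqF ?nu0.
have ln0 : l != 0 by rewrite gt_eqF.
exists (comb nu^-1 (- (nu^-1 * l^-1))), (comb (- nu^-1) (- (nu^-1 * l^-1))).
split; [split|split; [split|split]].
- exact: combT.
- by rewrite combM; congr comb; field; rewrite ?n0 ?ln0 //.
- exact: Pcomb.
- exact: combP.
- rewrite combJ Jcomb addrC; congr (_ *: _ + _ *: _); field; rewrite ?n0 ?ln0 //.
- rewrite trcomb; field; rewrite ?n0 ?ln0 //.
- by rewrite combT combM; congr comb; field; rewrite ?n0 ?ln0 //.
- by rewrite combM; congr comb; field; rewrite ?n0 ?ln0 //.
- by rewrite combM; congr comb; field; rewrite ?n0 ?ln0 //.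
- rewrite combJ Jcomb opprD -!scaleNr addrC; congr (_ *: _ + _ *: _); field; rewrite ?n0 ?ln0 //.
- by rewrite !combX -scaleNr.
- exact: Pcomb.
- exact: combP.
Qed.
End Plane.

Section Ind.
Variables (R : realType) (n : nat) (J : 'M[R]_n).
Hypotheses (Jskew : J^T = -J) (Ju : J \in unitmx).

Lemma ind (X : 'cV[R]_n) k : forall P : 'M[R]_n, \tr P = k%:R -> P^T = P -> P *m P = P -> P *m J = J *m P ->
  exists M, [/\ M^T *m M = P, P *m M = M, M *m P = M, M *m J = -(J *m M) & M *m X = -(P *m X)].
Proof.
elim/ltn_ind: k => k IH P trP Pt PP PJ.
case: (eqVneq P 0) => [->|P0].
  by exists 0; split; rewrite ?trmx0 ?mulmx0 ?mul0mx ?oppr0.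
have [w [l [w0 Pw JJw l0 wJX]]] := get_w Jskew Ju X Pt PP PJ P0.
have [Q [M1 [[Qt QQ PQ QP QJ] [[trQ M1M1 QM1 M1Q M1J] [M1X PM1 M1P]]]]] :=
  plane Jskew Pt PJ w0 Pw JJw l0 wJX.
set P' := P - Q.
have P't : P'^T = P' by rewrite /P' linearB /= Pt Qt.
have P'P' : P' *m P' = P' by rewrite /P' mulmxBl !mulmxBr PP PQ QP QQ subrr subr0.
have P'J : P' *m J = J *m P' by rewrite /P' mulmxBl mulmxBr PJ QJ.
have trP' : \tr P' = k%:R - 2 by rewrite /P' linearB /= trP trQ.
have k2 : (2 <= k)%N.
  have := trTM_ge0 P'; rewrite P't P'P' trP' subr_ge0.
  by rewrite ler_nat.
have lt : (k - 2 < k)%N by lia.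
have trP'' : \tr P' = (k - 2)%:R by rewrite trP' natrB.
have [M' [M'M' P'M' M'P' M'J M'X]] := IH _ lt P' trP'' P't P'P' P'J.
have PP' : P *m P' = P' by rewrite /P' mulmxBr PP PQ.
have P'P : P' *m P = P' by rewrite /P' mulmxBl PP QP.
have h1 : M1^T *m M' = 0.
  by rewrite -P'M' mulmxA -P't -trmx_mul /P' mulmxBl PM1 QM1 subrr trmx0 mul0mx.
have h2 : M'^T *m M1 = 0 by rewrite -[M'^T *m M1]trmxK trmx_mul trmxK h1 trmx0.
exists (M1 + M'); split.
- by rewrite [(M1 + M')^T]linearD /= mulmxDl !mulmxDr M1M1 M'M' h1 h2 addr0 add0r /P' addrC subrK.
- have PM' : P *m M' = M' by rewrite -P'M' mulmxA PP'.
  by rewrite mulmxDr PM1 PM'.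
- have M'P : M' *m P = M' by rewrite -M'P' -mulmxA P'P.
  by rewrite mulmxDl M1P M'P.
- by rewrite mulmxDl mulmxDr M1J M'J opprD.
- by rewrite mulmxDl M1X M'X /P' mulmxBl opprB addKr.
Qed.
End Ind.

Theorem mainTheorem2 (R : realType) (n : nat) (J : 'M[R]_n)
  (ip : 'M[R]_n -> 'M[R]_n -> R) :
  skew_sym J -> J \in unitmx -> is_inner_product (line J) ip ->
  WS_pair (line J) ip /\
  (forall X : 'cV[R]_n, exists N : 'M[R]_n,
     orth_mx N /\ N *m J *m invmx N = - J /\ N *m X = - X).
Proof.
move=> Jskew Ju [lin [sym pos]].
have getN : forall X : 'cV[R]_n, exists N : 'M[R]_n,
    [/\ N^T *m N = 1%:M, N \in unitmx, N *m J *m invmx N = - J, N *m J = - (J *m N) & N *m X = - X].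
  move=> X.
  have e1 : \tr (1%:M : 'M[R]_n) = n%:R by rewrite mxtrace1.
  have e2 : (1%:M : 'M[R]_n)^T = 1%:M by rewrite trmx1.
  have e3 : (1%:M : 'M[R]_n) *m 1%:M = 1%:M by rewrite mulmx1.
  have e4 : (1%:M : 'M[R]_n) *m J = J *m 1%:M by rewrite mul1mx mulmx1.
  have [N [NN _ _ NJ NX]] := ind Jskew Ju X e1 e2 e3 e4.
  have Nu : N \in unitmx by case: (mulmx1_unit NN).
  exists N; split => //; last by rewrite NX mul1mx.
  by rewrite NJ mulNmx -mulmxA mulmxV // mulmx1.
have lJ : forall c, line J (c *: J) by move=> c; exists c.
have ip0 : forall M, line J M -> ip 0 M = 0.
  move=> M VM; have := lin 1 0 0 M (ex_intro _ 0 (esym (scale0r J))) (ex_intro _ 0 (esym (scale0r J))) VM.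
  by rewrite scaler0 addr0 mul1r => h; lra.
have l0J : line J 0 by exists 0; rewrite scale0r.
have l1J : line J J by exists 1; rewrite scale1r.
have ipZ : forall x M, line J M -> ip (x *: J) M = x * ip J M.
  move=> x M VM; have := lin x J 0 M l1J l0J VM.
  by rewrite addr0 ip0 // addr0.
have ipJJ : forall x y, ip (x *: J) (y *: J) = x * y * ip J J.
  move=> x y; rewrite ipZ // (sym J (y *: J)) // ipZ //; ring.
split; last first.
  by move=> X; have [N [NN _ NJN _ NX]] := getN X; exists N.
split.
  split => //; split.
    move=> c K L [a ->] [b ->]; exists (c * a + b).
    by rewrite scalerA scalerDl.
  by move=> K [a ->]; rewrite /skew_sym linearZ /= Jskew scalerN.
split; first by [].
move=> J0 X [c ->]; have [N [NN Nu NJN NJ NX]] := getN X.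
have conj : forall a : R, N *m (a *: J) *m invmx N = (- a) *: J.
  by move=> a; rewrite -scalemxAr -scalemxAl NJN scalerN scaleNr.
exists N; split; last split => //.
- split => //; split.
    by move=> K [a ->]; rewrite conj; exists (- a).
  by move=> K L [a ->] [b ->]; rewrite !conj !ipJJ mulrNN.
- by rewrite -scalemxAr NJ scalerN scalemxAl.
Qed.
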